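(* Let $n>1$ be an integer and $S=S_1\cup S_2\subseteq U_{6n}$ with $S_1=\{a^{2r}b,\ a^{2r}b^2\mid 1\le r\le n-1\}$ and $S_2=\{a^{2r+1}b\mid 0\le r\le n-1\}$. Then $\mathrm{Cay}(U_{6n},S)$ is a connected integral graph whose spectrum (eigenvalues with multiplicities) is $\{[1-2n]^2,[-2]^{2n-2},[1]^{4n-2},[n-2]^1,[3n-2]^1\}$.
   Context: For an integer $n\ge1$, $U_{6n}=\langle a,b\mid a^{2n}=b^3=1,\ a^{-1}ba=b^{-1}\rangle$, a group of order $6n$. For a group $G$ and $S\subseteq G$ with $1\notin S=S^{-1}$, the Cayley graph $\mathrm{Cay}(G,S)$ has vertex set $G$ and edges $\{g,sg\}$ for $g\in G,s\in S$. A graph is integral if all eigenvalues of its adjacency matrix are integers. $[\lambda]^m$ denotes eigenvalue $\lambda$ with multiplicity $m$. *)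

(* Defs.v *)
From mathcomp Require Import all_boot all_order all_algebra all_fingroup all_field.
Set Implicit Arguments. Unset Strict Implicit. Unset Printing Implicit Defensive.
Import GRing.Theory Num.Theory.
Local Open Scope ring_scope.

Definition cay_adj (gT : finGroupType) (S : {set gT}) : rel gT :=
  fun g h => ((h * g^-1)%g \in S).

Definition cay_mx (gT : finGroupType) (S : {set gT}) : 'M[int]_#|gT| :=
  \matrix_(i < #|gT|, j < #|gT|)
     (cay_adj S (@enum_val gT predT i) (@enum_val gT predT j))%:R.

Definition cay_connected (gT : finGroupType) (S : {set gT}) : Prop :=
  forall g h : gT, connect (cay_adj S) g h.

Definition integral_mx m (A : 'M[int]_m) : Prop :=
  forall l : algC, eigenvalue (map_mx intr A) l -> l \in Num.int.

Definition S1 (gT : finGroupType) (a b : gT) (n : nat) : {set gT} :=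
  [set (a ^+ (2 * r) * b)%g | r : 'I_n & (1 <= r)%N]
  :|: [set (a ^+ (2 * r) * b ^+ 2)%g | r : 'I_n & (1 <= r)%N].

Definition S2 (gT : finGroupType) (a b : gT) (n : nat) : {set gT} :=
  [set (a ^+ (2 * r).+1 * b)%g | r : 'I_n].

(* Main.v *)
Require Import Defs.
From mathcomp Require Import all_boot all_order all_algebra all_fingroup all_field.
From mathcomp Require Import zify ring.
Import GRing.Theory Num.Theory.
Set Implicit Arguments. Unset Strict Implicit. Unset Printing Implicit Defensive.

Lemma cp_sim (R : idomainType) k (A D V : 'M[R]_k) :
  (\det V != 0)%R -> (A *m V = V *m D)%R -> char_poly A = char_poly D.
Proof.
move=> dV AV.
have E : (char_poly_mx A *m map_mx polyC V = map_mx polyC V *m char_poly_mx D)%R.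
  by rewrite /char_poly_mx mulmxBl mulmxBr -!map_mxM AV scalar_mxC.
have := congr1 determinant E; rewrite !det_mulmx (det_map_mx polyC) /char_poly => h.
apply: (@mulIf _ (\det V)%:P); first by rewrite polyC_eq0.
by rewrite /= h mulrC.
Qed.

Lemma rootXE (R : idomainType) (p : {poly R}) k x : root (p ^+ k) x = (0 < k)%N && root p x.
Proof. by rewrite /root horner_exp expf_eq0. Qed.

Section Grp.
Variables (m : nat) (gT : finGroupType) (a b : gT).
Local Notation n := m.+2.
Hypotheses (gen : <<[set a; b]>>%g = [set: gT]) (card : #|gT| = (6*n)%N)
  (ha : (a ^+ (2*n) = 1)%g) (hb : (b^+3 = 1)%g) (hab : (a^-1 * b * a = b^-1)%g).

Local Open Scope group_scope.

Lemma bA : b * a = a * b ^+ 2.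
Proof.
have binv : b^-1 = b ^+ 2.
  by apply: (mulgI b); rewrite mulgV -expgS hb.
by rewrite -binv -hab !mulgA mulgV mul1g.
Qed.

Lemma bjA j : b ^+ j * a = a * b ^+ (2 * j).
Proof.
elim: j => [|j IH]; first by rewrite mul1g mulg1.
by rewrite expgS -mulgA IH mulgA bA -mulgA -expgD; congr (_ * b ^+ _); lia.
Qed.

Lemma bjAi j i : b ^+ j * a ^+ i = a ^+ i * b ^+ (j * 2 ^ i).
Proof.
elim: i j => [|i IH] j; first by rewrite mulg1 mul1g muln1.
by rewrite expgS mulgA bjA -mulgA IH mulgA -expgS expnS; congr (_ * b ^+ _); lia.
Qed.

Definition P := ('I_6 * 'I_n)%type.
Definition el (p : P) : gT := a ^+ (2 * p.2 + p.1 %/ 3) * b ^+ (p.1 %% 3).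

Definition pcode (x y : nat) : P :=
  (inord (3 * odd x + y %% 3), inord ((x %% (2*n)) %/ 2)).

Lemma norm x y : a ^+ x * b ^+ y = el (pcode x y).
Proof.
rewrite /el /pcode /= !inordK; last 2 first.
- have := ltn_mod y 3; case: (odd x) => /=; lia.
- by rewrite ltn_divLR // mulnC ltn_mod.
have -> : (3 * odd x + y %% 3) %/ 3 = odd x.
  by rewrite mulnC divnMDl // divn_small ?addn0 // ltn_mod.
have -> : (3 * odd x + y %% 3) %% 3 = y %% 3.
  by rewrite mulnC modnMDl modn_mod.
rewrite expg_mod //.
have -> : 2 * ((x %% (2 * n)) %/ 2) + odd x = x %% (2 * n).
  have h2 : (odd x : nat) = (x %% (2*n)) %% 2 by rewrite modn_dvdm ?dvdn_mulr // modn2.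
  by rewrite h2 mulnC -divn_eq.
by rewrite expg_mod.
Qed.
Definition X := [set el p | p in [set: P]].

Lemma X_group : group_set X.
Proof.
apply/group_setP; split.
  by apply/imsetP; exists (ord0, ord0) => //; rewrite /el ?muln0 ?div0n ?mod0n ?addn0 !expg0 mulg1.
move=> x y /imsetP[p _ ->] /imsetP[q _ ->].
rewrite /el mulgA -(mulgA _ (b ^+ _)) bjAi mulgA -expgD -mulgA -expgD norm.
by apply: imset_f.
Qed.

Lemma X_all : X = [set: gT].
Proof.
apply/eqP; rewrite eqEsubset subsetT /=.
rewrite -gen (gen_subG _ (Group X_group)) subUset !sub1set /=.
have Ha : a \in X.
  by rewrite -[a]mulg1 -(expg0 b) -{1}(expg1 a) norm; apply: imset_f; rewrite inE.
have Hb : b \in X.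
  by rewrite -[b]mul1g -(expg0 a) -{1}(expg1 b) norm; apply: imset_f; rewrite inE.
by rewrite Ha Hb.
Qed.

Lemma el_inj : injective el.
Proof.
have : #|[set el p | p in [set: P]]| == #|[set: P]|.
  by rewrite -/X X_all !cardsT card card_prod !card_ord.
by move/imset_injP => H x y; apply: H; rewrite inE.
Qed.


Lemma ab_eq x y x' y' : x = x' %[mod 2*n] -> y = y' %[mod 3] ->
  a ^+ x * b ^+ y = a ^+ x' * b ^+ y'.
Proof.
by move=> hx hy; rewrite -(expg_mod x ha) hx expg_mod // -(expg_mod y hb) hy expg_mod.
Qed.

Lemma elM (c0 c : 'I_6) (r0 r : 'I_n) : el (c0, r0) * el (c, r) =
  a ^+ (2 * r0 + c0 %/ 3 + (2 * r + c %/ 3)) * b ^+ (c0 %% 3 * 2 ^ (2 * r + c %/ 3) + c %% 3).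
Proof.
by rewrite /el /= mulgA -(mulgA _ (b ^+ _)) bjAi mulgA -expgD -mulgA -expgD.
Qed.

Lemma pow4 r : (4 ^ r = 1 %[mod 3])%N.
Proof. by elim: r => // r IH; rewrite expnS -modnMmr IH. Qed.

Lemma bexp c0 r e j j' : ((c0 * 2 ^ e + j) %% 3 = j' %% 3 ->
  c0 * 2 ^ (2 * r + e) + j = j' %[mod 3])%N.
Proof.
move=> <-; rewrite -modnDml -modnMmr expnD.
have -> : (2 ^ (2 * r) = 4 ^ r)%N by rewrite expnM.
rewrite -[(4 ^ r * 2 ^ e) %% 3]modnMml pow4 mul1n.
by rewrite modnMmr modnDml.
Qed.

Lemma aexp r0 r e0 e k e' : (e0 + e = 2 * k + e' ->
  2 * r0 + e0 + (2 * r + e) = 2 * ((r0 + r + k) %% n) + e' %[mod 2 * n])%N.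
Proof.
move=> h; rewrite muln_modr modnDml.
by have -> : (2 * r0 + e0 + (2 * r + e) = 2 * (r0 + r + k) + e')%N by lia.
Qed.

Lemma aexp0 r0 r e0 e e' : (e0 + e = e' ->
  2 * r0 + e0 + (2 * r + e) = 2 * ((r0 + r) %% n) + e' %[mod 2 * n])%N.
Proof. by move=> h; rewrite -[(r0 + r)%N]addn0; apply: aexp; rewrite muln0. Qed.

Definition cS1 := [:: 1; 2; 0; 5; 3; 4]%N.
Definition cS2 := [:: 2; 0; 1; 4; 5; 3]%N.
Definition cT := [:: 4; 5; 3; 2; 0; 1]%N.

Lemma mulS1 (c0 c : 'I_6) (r0 r : 'I_n) : val c0 = 1%N ->
  el (c0, r0) * el (c, r) = el (inord (nth 0%N cS1 c), (r0 + r)%R).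
Proof.
move=> h; rewrite elM h.
case: c => [[|[|[|[|[|[|//]]]]]] hc]; rewrite /el /= inordK //;
  apply: ab_eq; try (apply: bexp; done);
  apply: aexp0 => //.
Qed.

Lemma mulS2 (c0 c : 'I_6) (r0 r : 'I_n) : val c0 = 2%N ->
  el (c0, r0) * el (c, r) = el (inord (nth 0%N cS2 c), (r0 + r)%R).
Proof.
move=> h; rewrite elM h.
case: c => [[|[|[|[|[|[|//]]]]]] hc]; rewrite /el /= inordK //;
  apply: ab_eq; try (apply: bexp; done);
  apply: aexp0 => //.
Qed.

Lemma mulT (c0 c : 'I_6) (r : 'I_n) : val c0 = 4%N ->
  exists r' : 'I_n, forall r0 : 'I_n,
  el (c0, r0) * el (c, r) = el (inord (nth 0%N cT c), (r0 + r')%R).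
Proof.
move=> h.
have v1 : val (r + 1)%R = (r + 1) %% n by rewrite /= (@modn_small 1).
case: c => [[|[|[|[|[|[|//]]]]]] hc].
all: first [exists r; move=> r0; rewrite elM h /el /= inordK //;
  apply: ab_eq; [by apply: aexp0 | by apply: bexp]
 | exists (r + 1)%R; move=> r0; rewrite elM h /el /= inordK //;
  apply: ab_eq; [by rewrite (@modn_small 1) // modnDmr [(r0 + (r + 1))%N]addnA; apply: aexp | by apply: bexp]].
Qed.


Definition pinv (g : gT) : P := odflt (ord0, ord0) [pick p | el p == g].

Lemma elK g : el (pinv g) = g.
Proof.
rewrite /pinv; case: pickP => [p /eqP //| H] /=.
have : g \in X by rewrite X_all inE.
by case/imsetP => p _ eg; have := H p; rewrite eg eqxx.
Qed.

Lemma pinvK p : pinv (el p) = p.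
Proof. by apply: el_inj; rewrite elK. Qed.

Lemma pinv_inj : injective pinv.
Proof. by move=> g h e; rewrite -(elK g) e elK. Qed.

Definition Sp : {set P} :=
  [set p : P | (((val p.1 == 1%N) || (val p.1 == 2%N)) && (val p.2 != 0%N)) || (val p.1 == 4%N)].

Lemma S_el : S1 a b n :|: S2 a b n = el @: Sp.
Proof.
apply/setP => x; apply/idP/idP.
  rewrite !inE; case/orP => [/orP[]|] /imsetP[r hr ->].
  - apply/imsetP; exists (inord 1, r); last by rewrite /el inordK //= addn0 expg1.
    by rewrite inE /= inordK //; move: hr; rewrite !inE lt0n => ->.
  - apply/imsetP; exists (inord 2, r); last by rewrite /el inordK //= addn0.
    by rewrite inE /= inordK //; move: hr; rewrite !inE lt0n => ->.
  - apply/imsetP; exists (inord 4, r); last by rewrite /el inordK //= addn1 expg1.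
    by rewrite inE /= inordK.
case/imsetP => [[c r] hp ->]; rewrite inE /= in hp.
rewrite /el /= !inE.
case/orP: hp => [/andP[/orP[] /eqP -> hr]| /eqP ->].
- apply/orP; left; apply/orP; left; apply/imsetP; exists r; last by rewrite addn0 expg1.
  by rewrite inE lt0n.
- apply/orP; left; apply/orP; right; apply/imsetP; exists r; last by rewrite addn0.
  by rewrite inE lt0n.
- by apply/orP; right; apply/imsetP; exists r; rewrite // addn1 expg1.
Qed.


Local Open Scope ring_scope.

Definition P1tab : seq (seq int) :=
  [:: [:: 1; 1; 1; 0; 0; 0]; [:: 1; -1; 0; 0; 0; 0]; [:: 1; 1; -2; 0; 0; 0];
      [:: 0; 0; 0; 1; 1; 1]; [:: 0; 0; 0; 1; -1; 0]; [:: 0; 0; 0; 1; 1; -2]].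
Definition P2tab : seq (seq int) :=
  [:: [:: 1; 1; 1; 1; 1; 1]; [:: 1; 1; 1; -1; -1; -1]; [:: 1; -1; 0; 0; 1; -1];
      [:: 1; 1; -2; -2; 1; 1]; [:: 1; -1; 0; 0; -1; 1]; [:: 1; 1; -2; 2; -1; -1]].
Definition Ptab (bb : bool) (q c : nat) : int :=
  nth 0 (nth [::] (if bb then P2tab else P1tab) q) c.
Definition al1 : seq int := [:: 2; -1; -1; 2; -1; -1].
Definition al2 : seq int := [:: 2; 2; -1; -1; -1; -1].
Definition be : seq int := [:: 1; -1; 1; 1; -1; -1].
Definition gP (bb : bool) : seq int :=
  if bb then [:: 6; 6; 4; 12; 4; 12] else [:: 3; 2; 6; 3; 2; 6].

Lemma chk1 (q c : 'I_6) :
  Ptab false q (nth 0%N cS1 c) + Ptab false q (nth 0%N cS2 c) = nth 0 al1 q * Ptab false q c.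
Proof. by case: q => [[|[|[|[|[|[|//]]]]]] ?]; case: c => [[|[|[|[|[|[|//]]]]]] ?]. Qed.

Lemma chk2 (q c : 'I_6) :
  Ptab true q (nth 0%N cS1 c) + Ptab true q (nth 0%N cS2 c) = nth 0 al2 q * Ptab true q c.
Proof. by case: q => [[|[|[|[|[|[|//]]]]]] ?]; case: c => [[|[|[|[|[|[|//]]]]]] ?]. Qed.

Lemma chk3 (q c : 'I_6) :
  Ptab true q (nth 0%N cT c) = nth 0 be q * Ptab true q c.
Proof. by case: q => [[|[|[|[|[|[|//]]]]]] ?]; case: c => [[|[|[|[|[|[|//]]]]]] ?]. Qed.

Lemma chkG bb (q q' : 'I_6) :
  \sum_(c < 6) Ptab bb q c * Ptab bb q' c = if q == q' then nth 0 (gP bb) q else 0.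
Proof.
rewrite !big_ord_recl big_ord0 /=.
by case: bb; case: q => [[|[|[|[|[|[|//]]]]]] ?]; case: q' => [[|[|[|[|[|[|//]]]]]] ?].
Qed.

Lemma gP_neq0 bb (q : 'I_6) : nth 0 (gP bb) q != 0.
Proof. by case: bb; case: q => [[|[|[|[|[|[|//]]]]]] ?]. Qed.

Lemma cS_lt (c : 'I_6) : [/\ (nth 0 cS1 c < 6)%N, (nth 0 cS2 c < 6)%N & (nth 0 cT c < 6)%N].
Proof. by case: c => [[|[|[|[|[|[|//]]]]]] ?]. Qed.


Definition zf (t r : nat) : int :=
  if t == 0%N then 1 else if (r < t)%N then 1 else if r == t then - (t%:Z) else 0.

Lemma zf_split t (G : nat -> int) : (0 < t < n)%N ->
  \sum_(0 <= r < n) zf t r * G r = \sum_(0 <= r < t) G r - t%:Z * G t.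
Proof.
case/andP => t0 tn.
rewrite (@big_cat_nat _ _ _ t 0%N n _ _ (leq0n t) (ltnW tn)) /= (big_ltn tn).
have -> : \sum_(0 <= r < t) zf t r * G r = \sum_(0 <= r < t) G r.
  apply: eq_big_nat => r /andP[_ rt].
  by rewrite /zf rt (negbTE (lt0n_neq0 t0)) mul1r.
rewrite [X in _ + (_ + X)]big_nat_cond [X in _ + (_ + X)]big1 ?addr0; last first.
  move=> r /andP[/andP[tr _] _]; rewrite /zf (negbTE (lt0n_neq0 t0)).
  by rewrite ltnNge (ltnW tr) /= gtn_eqF // mul0r.
by rewrite /zf (negbTE (lt0n_neq0 t0)) ltnn eqxx mulNr.
Qed.


Definition Z (t r : 'I_n) : int := zf t r.

Lemma sum_ordn (F : nat -> int) : \sum_(r < n) F r = \sum_(0 <= r < n) F r.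
Proof. by rewrite -(big_mkord xpredT). Qed.

Lemma sum_one k : \sum_(0 <= r < k) (1 : int) = k%:Z.
Proof. by rewrite sumr_const_nat subn0 natz. Qed.

Lemma sumZ (t : 'I_n) : \sum_r Z t r = if val t == 0%N then n%:Z else 0.
Proof.
rewrite /Z sum_ordn; case: eqP => [t0 | /eqP t0].
  by rewrite /zf t0 /= sum_one.
have := zf_split (fun _ => 1) (t:=t); rewrite lt0n t0 ltn_ord => /(_ isT).
under eq_bigr do rewrite mulr1.
by move=> ->; rewrite sum_one mulr1 subrr.
Qed.

Lemma gramZ (t t' : 'I_n) : \sum_r Z t r * Z t' r =
  if t == t' then (if val t == 0%N then n%:Z else t%:Z + t%:Z ^+ 2) else 0.
Proof.
have Z0 (u r : 'I_n) : val u = 0%N -> Z u r = 1 by rewrite /Z /zf => ->.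
have key (u v : 'I_n) : val u != 0%N -> (u < v)%N -> \sum_r Z u r * Z v r = 0.
  move=> u0 uv; rewrite /Z (sum_ordn (fun r => zf u r * zf v r)) zf_split; last by rewrite lt0n u0 ltn_ord.
  have -> : \sum_(0 <= r < u) zf v r = \sum_(0 <= r < u) (1 : int).
    apply: eq_big_nat => r /andP[_ ru].
    by rewrite /zf ifF ?(ltn_trans ru uv) //; apply/negbTE; rewrite -lt0n (leq_ltn_trans _ uv).
  by rewrite sum_one /zf ifF ?uv ?mulr1 ?subrr //; apply/negbTE; rewrite -lt0n (leq_ltn_trans _ uv).
case: (eqVneq (val t) 0%N) => t0.
  under eq_bigr do rewrite Z0 // mul1r.
  rewrite sumZ; case: (eqVneq t t') => [<-|tt']; first by rewrite t0.
  rewrite ifF //; apply/negbTE; apply: contra tt' => /eqP t'0.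
  by apply/eqP/val_inj; rewrite /= t0 t'0.
case: (eqVneq (val t') 0%N) => t'0.
  under eq_bigr do rewrite (Z0 t') // mulr1.
  rewrite sumZ; case: ifP => [/eqP ht|_]; first by rewrite ht in t0.
  rewrite ifF //; apply/negbTE; apply: contra t0 => /eqP ->.
  by rewrite t'0.
case: (ltngtP t t') => [tt'|t't|tt'].
- by rewrite ifF ?key //; apply/negbTE; rewrite neq_ltn tt'.
- by under eq_bigr do rewrite mulrC; rewrite ifF ?key //; apply/negbTE; rewrite neq_ltn t't orbT.
have -> : t' = t by apply: val_inj.
rewrite eqxx /Z (sum_ordn (fun r => zf t r * zf t r)) zf_split; last by rewrite lt0n t0 ltn_ord.
have -> : \sum_(0 <= r < t) zf t r = \sum_(0 <= r < t) (1 : int).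
  by apply: eq_big_nat => r /andP[_ ru]; rewrite /zf (negbTE t0) ru.
by rewrite sum_one /zf (negbTE t0) ltnn eqxx mulrN opprK expr2.
Qed.


Lemma shift2 (F : 'I_n -> int) (r : 'I_n) : \sum_(r0 : 'I_n) F (r0 + r) = \sum_(x : 'I_n) F x.
Proof. by rewrite [RHS](reindex_inj (addIr r)). Qed.

Lemma shift1 (F : 'I_n -> int) (r : 'I_n) :
  \sum_(r0 : 'I_n | val r0 != 0%N) F (r0 + r) = \sum_(x : 'I_n) F x - F r.
Proof.
rewrite -(shift2 F r) [in RHS](bigD1 ord0) //=.
have -> : (ord0 + r = r)%R by apply: val_inj; rewrite /= add0n modn_small.
by rewrite addrAC subrr add0r; apply: eq_bigl.
Qed.

Lemma termc (G : P -> int) (c : 'I_6) :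
  \sum_(r : 'I_n) (if (c, r) \in Sp then G (c, r) else 0) =
  if val c == 4%N then \sum_(r : 'I_n) G (c, r) else
  if (val c == 1%N) || (val c == 2%N) then \sum_(r : 'I_n | val r != 0%N) G (c, r) else 0.
Proof.
case: ifP => c4.
  by apply: eq_bigr => r _; rewrite inE /= c4 orbT.
case: ifP => c12.
  by rewrite [RHS]big_mkcond; apply: eq_bigr => r _; rewrite inE /= c12 c4 orbF.
by rewrite big1 // => r _; rewrite inE /= c12 c4.
Qed.

Lemma sumSp (G : P -> int) : \sum_(p in Sp) G p =
  \sum_(r : 'I_n | val r != 0%N) G (inord 1, r) + \sum_(r : 'I_n | val r != 0%N) G (inord 2, r)
  + \sum_(r : 'I_n) G (inord 4, r).
Proof.
rewrite big_mkcond.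
have -> : \sum_(p : P) (if p \in Sp then G p else 0) =
   \sum_(c : 'I_6) \sum_(r : 'I_n) (if (c, r) \in Sp then G (c, r) else 0).
  by rewrite pair_bigA; apply: eq_bigr => -[].
rewrite (big_ord_recl 5) (big_ord_recl 4) (big_ord_recl 3) (big_ord_recl 2).
rewrite (big_ord_recl 1) (big_ord_recl 0) big_ord0.
rewrite !termc /= add0r !addr0.
have -> : lift ord0 (lift ord0 (lift ord0 (lift ord0 ord0))) = inord 4 :> 'I_6.
  by apply: val_inj; rewrite /= inordK.
have -> : lift ord0 (lift ord0 ord0) = inord 2 :> 'I_6.
  by apply: val_inj; rewrite /= inordK.
have -> : lift ord0 ord0 = inord 1 :> 'I_6.
  by apply: val_inj; rewrite /= inordK.
by rewrite add0r addrA.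
Qed.

Definition w (qt p : P) : int := Ptab (val qt.2 == 0%N) qt.1 p.1 * Z qt.2 p.2.
Definition dval (qt : P) : int :=
  if val qt.2 == 0%N then (n%:Z - 1) * nth 0 al2 qt.1 + n%:Z * nth 0 be qt.1
  else - nth 0 al1 qt.1.

Lemma eigP (qt p : P) :
  \sum_(x in S1 a b n :|: S2 a b n) w qt (pinv (x * el p)%g) = dval qt * w qt p.
Proof.
case: qt => q t; case: p => c r.
rewrite S_el big_imset /=; last by move=> x y _ _; apply: el_inj.
rewrite sumSp.
have [r'' hT] := @mulT (inord 4) c r (inordK (isT : (4 < 6)%N)).
have [l1 l2 l3] := cS_lt c.
have e1 : \sum_(r0 : 'I_n | val r0 != 0%N) w (q, t) (pinv (el (inord 1, r0) * el (c, r))%g)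
   = Ptab (val t == 0%N) q (nth 0%N cS1 c) * (\sum_x Z t x - Z t r).
  rewrite -shift1 mulr_sumr; apply: eq_bigr => r0 _.
  rewrite mulS1; last exact: inordK.
  by rewrite pinvK /w /= inordK.
have e2 : \sum_(r0 : 'I_n | val r0 != 0%N) w (q, t) (pinv (el (inord 2, r0) * el (c, r))%g)
   = Ptab (val t == 0%N) q (nth 0%N cS2 c) * (\sum_x Z t x - Z t r).
  rewrite -shift1 mulr_sumr; apply: eq_bigr => r0 _.
  rewrite mulS2; last exact: inordK.
  by rewrite pinvK /w /= inordK.
have e3 : \sum_(r0 : 'I_n) w (q, t) (pinv (el (inord 4, r0) * el (c, r))%g)
   = Ptab (val t == 0%N) q (nth 0%N cT c) * (\sum_x Z t x).
  transitivity (\sum_(r0 : 'I_n) Ptab (val t == 0%N) q (nth 0%N cT c) * Z t (r0 + r'')).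
    by apply: eq_bigr => r0 _; rewrite hT pinvK /w /= inordK.
  by rewrite -mulr_sumr (shift2 (Z t)).
rewrite e1 e2 e3 sumZ /dval /w /=.
case: eqP => t0.
  have -> : Z t r = 1 by rewrite /Z /zf t0.
  rewrite chk3 -mulrDl chk2; ring.
rewrite mulr0 addr0 !sub0r !mulrN -opprD -mulrDl chk1; ring.
Qed.

Definition fv (i : 'I_#|gT|) : gT := @enum_val gT predT i.
Definition pi (i : 'I_#|gT|) : P := pinv (fv i).
Definition U : 'M[int]_#|gT| := \matrix_(k, rho) w (pi rho) (pi k).
Definition dr : 'rV[int]_#|gT| := \row_rho dval (pi rho).
Definition gval (qt : P) : int :=
  nth 0 (gP (val qt.2 == 0%N)) qt.1 *
  (if val qt.2 == 0%N then n%:Z else qt.2%:Z + qt.2%:Z ^+ 2).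

Lemma big_fv (R : Type) (idx : R) (op : Monoid.com_law idx) (F : gT -> R) :
  \big[op/idx]_(k : 'I_#|gT|) F (fv k) = \big[op/idx]_(g : gT) F g.
Proof.
by rewrite [RHS](reindex (@enum_val gT predT)) //; apply: onW_bij; apply: enum_val_bij.
Qed.

Lemma big_el (R : Type) (idx : R) (op : Monoid.com_law idx) (F : gT -> R) :
  \big[op/idx]_(g : gT) F g = \big[op/idx]_(p : P) F (el p).
Proof. by rewrite (reindex el) //; apply: onW_bij; exists pinv; [apply: pinvK | apply: elK]. Qed.

Lemma pi_inj : injective pi.
Proof. by move=> i j /pinv_inj /enum_val_inj. Qed.

Lemma AU : cay_mx (S1 a b n :|: S2 a b n) *m U = U *m diag_mx dr.
Proof.
apply/matrixP => k rho; rewrite mul_mx_diag !mxE.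
under eq_bigr do rewrite !mxE.
rewrite (@big_fv _ _ _ (fun g => (cay_adj (S1 a b n :|: S2 a b n) (fv k) g)%:R * w (pi rho) (pinv g))).
rewrite (reindex_inj (mulIg (fv k))) /= [RHS]mulrC.
rewrite -eigP /pi elK [RHS]big_mkcond; apply: eq_bigr => x _.
rewrite /cay_adj mulgK.
by case: (x \in _); rewrite ?mul1r ?mul0r.
Qed.

Lemma gram_w (A B : P) : \sum_(p : P) w A p * w B p =
  if A == B then gval A else 0.
Proof.
case: A => q t; case: B => q' t'.
have -> : \sum_(p : P) w (q, t) p * w (q', t') p =
   \sum_(c : 'I_6) \sum_(r : 'I_n) w (q, t) (c, r) * w (q', t') (c, r).
  by rewrite pair_bigA; apply: eq_bigr => -[].
rewrite /w /=.
have -> : \sum_(c : 'I_6) \sum_(r : 'I_n)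
    Ptab (val t == 0%N) q c * Z t r * (Ptab (val t' == 0%N) q' c * Z t' r) =
    (\sum_(c : 'I_6) Ptab (val t == 0%N) q c * Ptab (val t' == 0%N) q' c) *
    (\sum_(r : 'I_n) Z t r * Z t' r).
  rewrite mulr_suml; apply: eq_bigr => c _; rewrite mulr_sumr; apply: eq_bigr => r _.
  by rewrite mulrACA.
rewrite gramZ; case: (eqVneq t t') => [<-|tt']; last first.
  by rewrite mulr0; case: eqP => // -[_ /eqP]; rewrite (negbTE tt').
rewrite chkG; case: (eqVneq q q') => [<-|qq']; last first.
  by rewrite mul0r; case: eqP => // -[/eqP]; rewrite (negbTE qq').
by rewrite eqxx /gval.
Qed.

Lemma UtU : U^T *m U = diag_mx (\row_rho gval (pi rho)).
Proof.
apply/matrixP => rho sig; rewrite !mxE.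
under eq_bigr do rewrite !mxE.
rewrite (@big_fv _ _ _ (fun g => w (pi rho) (pinv g) * w (pi sig) (pinv g))).
rewrite (@big_el _ _ _ (fun g => w (pi rho) (pinv g) * w (pi sig) (pinv g))).
under eq_bigr do rewrite pinvK.
rewrite gram_w (inj_eq pi_inj).
by case: eqP => [->|_]; rewrite ?mulr1n ?mulr0n.
Qed.

Lemma gval_neq0 qt : gval qt != 0.
Proof.
case: qt => q t; rewrite /gval mulf_eq0 negb_or gP_neq0 /=.
case: ifP => [_|/negbT t0]; first by [].
by rewrite expr2 -PoszM -PoszD; lia.
Qed.

Lemma detU : \det U != 0.
Proof.
have h := congr1 determinant UtU.
rewrite det_mulmx det_tr det_diag in h.
have : \prod_i (\row_rho gval (pi rho)) 0 i != 0.
  by apply/prodf_neq0 => i _; rewrite mxE gval_neq0.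
by rewrite -h mulf_eq0 negb_or => /andP[].
Qed.

Lemma cpD : char_poly (diag_mx dr) =
  \prod_(c : 'I_6) (('X - (dval (c, ord0))%:P) * ('X - (- nth 0 al1 c)%:P) ^+ m.+1).
Proof.
rewrite char_poly_trig ?diag_mx_is_trig //.
under eq_bigr do rewrite !mxE eqxx mulr1n.
rewrite (@big_fv _ _ _ (fun g => 'X - (dval (pinv g))%:P)).
rewrite (@big_el _ _ _ (fun g => 'X - (dval (pinv g))%:P)).
under eq_bigr do rewrite pinvK.
have -> : \prod_(p : P) ('X - (dval p)%:P) = \prod_(c : 'I_6) \prod_(r : 'I_n) ('X - (dval (c, r))%:P).
  by rewrite pair_bigA; apply: eq_bigr => -[].
apply: eq_bigr => c _; rewrite big_ord_recl; congr (_ * _).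
transitivity (\prod_(i < m.+1) ('X - (- nth 0 al1 c)%:P)).
  by apply: eq_bigr => i _; rewrite /dval /=.
by rewrite prodr_const card_ord.
Qed.

Lemma cp_final :
  \prod_(c : 'I_6) (('X - (dval (c, ord0))%:P) * ('X - (- nth 0 al1 c)%:P) ^+ m.+1) =
    ('X - (1 - 2 * (n%:Z))%:P) ^+ 2
    * ('X - (-2)%:P) ^+ (2 * n - 2)
    * ('X - 1%:P) ^+ (4 * n - 2)
    * ('X - (n%:Z - 2)%:P)
    * ('X - (3 * (n%:Z) - 2)%:P) :> {poly int}.
Proof.
rewrite big_split /= prodrXl.
rewrite (big_ord_recl 5) (big_ord_recl 4) (big_ord_recl 3) (big_ord_recl 2).
rewrite (big_ord_recl 1) (big_ord_recl 0) big_ord0.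
rewrite (big_ord_recl 5) (big_ord_recl 4) (big_ord_recl 3) (big_ord_recl 2).
rewrite (big_ord_recl 1) (big_ord_recl 0) big_ord0 /dval /=.
have c1 : (n%:Z - 1) * 2 + n%:Z * 1 = 3 * n%:Z - 2 by ring.
have c2 : (n%:Z - 1) * 2 + n%:Z * -1 = n%:Z - 2 by ring.
have c3 : (n%:Z - 1) * -1 + n%:Z * 1 = 1 by ring.
have c4 : (n%:Z - 1) * -1 + n%:Z * -1 = 1 - 2 * n%:Z by ring.
rewrite c1 c2 c3 c4 opprK.
have -> : (2 * n - 2 = m.+1 + m.+1)%N by lia.
have -> : (4 * n - 2 = m.+1 + m.+1 + m.+1 + m.+1 + 2)%N by lia.
rewrite !exprMn expr1n !exprD.
move: ('X - (3 * n%:Z - 2)%:P) ('X - (n%:Z - 2)%:P) ('X - 1%:P) ('X - (1 - 2 * n%:Z)%:P)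
  ('X - (-2)%:P) => x1 x2 x3 x4 x5.
move: (x3 ^+ m.+1) (x5 ^+ m.+1) => y3 y5.
ring.
Qed.

Lemma connS : cay_connected (S1 a b n :|: S2 a b n).
Proof.
set S := S1 a b n :|: S2 a b n.
pose R := [set x | [forall g, connect (cay_adj S) g (x * g)%g]].
have gR : group_set R.
  apply/group_setP; split.
    by rewrite inE; apply/forallP => g; rewrite mul1g connect0.
  move=> x y; rewrite !inE => /forallP hx /forallP hy; apply/forallP => g.
  by apply: connect_trans (hy g) _; rewrite -mulgA; apply: hx.
have SR : S \subset R.
  apply/subsetP => s sS; rewrite inE; apply/forallP => g; apply: connect1.
  by rewrite /cay_adj mulgK.
have xS : (a ^+ 2 * b)%g \in S.
  rewrite !inE; apply/orP; left; apply/orP; left; apply/imsetP.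
  by exists (inord 1); rewrite ?inE inordK.
have yS : (a ^+ 2 * b ^+ 2)%g \in S.
  rewrite !inE; apply/orP; left; apply/orP; right; apply/imsetP.
  by exists (inord 1); rewrite ?inE inordK.
have zS : (a * b)%g \in S.
  rewrite !inE; apply/orP; right; apply/imsetP.
  by exists ord0; rewrite // muln0 expg1.
have bG : b \in <<S>>%g.
  have -> : b = ((a ^+ 2 * b)^-1 * (a ^+ 2 * b ^+ 2))%g.
    by rewrite invMg -mulgA mulKg expgS expg1 mulKg.
  by rewrite groupM ?groupV ?mem_gen.
have aG : a \in <<S>>%g.
  have -> : a = ((a * b) * b^-1)%g by rewrite mulgK.
  by rewrite groupM ?groupV // mem_gen.
have allS : [set: gT] \subset <<S>>%g.
  by rewrite -gen gen_subG subUset !sub1set aG bG.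
have allR : [set: gT] \subset R.
  apply: subset_trans allS _.
  by rewrite (gen_subG _ (Group gR)).
move=> g h; have := subsetP allR (h * g^-1)%g; rewrite inE => /(_ isT).
by rewrite inE => /forallP /(_ g); rewrite mulgKV.
Qed.

Lemma main_sec :
  let S := S1 a b n :|: S2 a b n in
  cay_connected S /\ integral_mx (cay_mx S) /\
  char_poly (cay_mx S) =
    ('X - (1 - 2 * (n%:Z))%:P) ^+ 2
    * ('X - (-2)%:P) ^+ (2 * n - 2)
    * ('X - 1%:P) ^+ (4 * n - 2)
    * ('X - (n%:Z - 2)%:P)
    * ('X - (3 * (n%:Z) - 2)%:P).
Proof.
move=> S.
have cp : char_poly (cay_mx S) =
    ('X - (1 - 2 * (n%:Z))%:P) ^+ 2
    * ('X - (-2)%:P) ^+ (2 * n - 2)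
    * ('X - 1%:P) ^+ (4 * n - 2)
    * ('X - (n%:Z - 2)%:P)
    * ('X - (3 * (n%:Z) - 2)%:P).
  by rewrite (cp_sim detU AU) cpD cp_final.
split; first exact: connS.
split => // l.
rewrite eigenvalue_root_char -map_char_poly cp.
move=> H; apply: contraTT H => nl.
have nc (c : int) : (l == c%:~R) = false.
  by apply/negbTE; apply: contra nl => /eqP ->; exact: intr_int.
by rewrite !rmorphM !rmorphXn /= !map_polyXsubC !rootM !rootXE !root_XsubC !nc /= ?andbF.
Qed.

End Grp.

Unset Implicit Arguments.
Local Open Scope ring_scope.

Theorem corollary4p5 (n : nat) (gT : finGroupType) (a b : gT) :
  (1 < n)%N ->
  <<[set a; b]>>%g = [set: gT] ->
  #|gT| = (6 * n)%N ->
  (a ^+ (2 * n))%g = 1%g -> (b ^+ 3)%g = 1%g -> (a^-1 * b * a)%g = (b^-1)%g ->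
  let S := S1 a b n :|: S2 a b n in
  cay_connected S /\ integral_mx (cay_mx S) /\
  char_poly (cay_mx S) =
    ('X - (1 - 2 * (n%:Z))%:P) ^+ 2
    * ('X - (-2)%:P) ^+ (2 * n - 2)
    * ('X - 1%:P) ^+ (4 * n - 2)
    * ('X - (n%:Z - 2)%:P)
    * ('X - (3 * (n%:Z) - 2)%:P).
Proof.
case: n => [|[|m]] // _ gen card ha hb hab.
exact: (main_sec gen card ha hb hab).
Qed.
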